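(* Let $A\in\mathbb{R}^{n\times n}$ and $B\in\mathbb{R}^{n\times m}$ with $\rho(|A|)<1$, and let $T$ be a positive integer. Let $i,j\in\{1,\dots,n\}$, $i\neq j$, and $w\in\mathbb{R}$ be such that $\rho(|A|+|w|e_je_i^{\top})<1$. Then, whenever the respective Gramians are positive definite, $$\operatorname{tr}(\mathcal{W}_A^{-1})\ge\frac{n^2}{\operatorname{tr}(\mathcal{H}_{\mathcal{X}})},\qquad \operatorname{tr}(\mathcal{W}^{-1}_{A+we_je_i^{\top}})\ge\frac{n^2}{(1+\alpha\beta)\operatorname{tr}(\mathcal{H}_{\mathcal{X}})+\alpha^2\gamma\bar\gamma}.$$
   Context: $|\cdot|$ is taken entrywise; $\rho$ is the spectral radius; $e_k$ is the $k$-th canonical unit vector; $\|\cdot\|$ is the Euclidean norm. For $Z\in\mathbb{R}^{n\times n}$, $\mathcal{W}_Z=\sum_{t=0}^{T-1}Z^tBB^{\top}(Z^t)^{\top}$. Define $\mathcal{X}=(I-|A|)^{-1}$, $\mathcal{H}_{\mathcal{X}}=\mathcal{X}|B||B|^{\top}\mathcal{X}^{\top}$, $\alpha_{pq}=\frac{|w|}{1-|w|e_p^{\top}\mathcal{X}e_q}$, $\alpha=\max_{p\neq q}\alpha_{pq}$, $\beta=\max\{\max_{p\neq q}2e_p^{\top}\mathcal{X}e_q,\ \max_{p\neq q}e_p^{\top}\mathcal{X}e_q+\max_{q}\|\mathcal{X}e_q\|\}$, $\gamma=\max_k e_k^{\top}\mathcal{X}^{\top}\mathcal{X}e_k$, $\bar\gamma=\max_k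 e_k^{\top}\mathcal{X}|B||B|^{\top}\mathcal{X}^{\top}e_k$. *)

(* Defs.v *)
From HB Require Import structures.
From mathcomp Require Import all_boot all_order all_algebra.
From mathcomp Require Import boolp classical_sets reals.
From mathcomp Require Import complex.
Set Implicit Arguments. Unset Strict Implicit. Unset Printing Implicit Defensive.
Import Order.TTheory GRing.Theory Num.Theory.
Local Open Scope ring_scope.

Section Defs.
Variable R : realType.

Definition absmx m n (M : 'M[R]_(m, n)) : 'M[R]_(m, n) := map_mx Num.norm M.

Definition spectral_radius n (M : 'M[R]_n) : R :=
  sup [set r : R | exists lam : R[i],
        eigenvalue (map_mx (fun x : R => x%:C%C) M) lam /\ r%:C%C = `|lam|].

Definition unitv n (k : 'I_n) : 'cV[R]_n := delta_mx k 0.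

Definition gramian n m (T : nat) (Z : 'M[R]_n) (B : 'M[R]_(n, m)) : 'M[R]_n :=
  \sum_(t < T) (Z ^+ t *m B *m B^T *m (Z ^+ t)^T).

Definition posdef n (M : 'M[R]_n) : Prop :=
  M^T = M /\ forall x : 'cV[R]_n, x != 0 -> 0 < (x^T *m M *m x) 0 0.

Definition Xmx n (A : 'M[R]_n) : 'M[R]_n := invmx (1%:M - absmx A).

Definition Hmx n m (A : 'M[R]_n) (B : 'M[R]_(n, m)) : 'M[R]_n :=
  Xmx A *m absmx B *m (absmx B)^T *m (Xmx A)^T.

Definition alpha_pq n (A : 'M[R]_n) (w : R) (p q : 'I_n) : R :=
  `|w| / (1 - `|w| * ((unitv p)^T *m Xmx A *m unitv q) 0 0).

Definition alpha n (A : 'M[R]_n) (w : R) : R :=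
  \big[Num.max/0]_(p < n) \big[Num.max/0]_(q < n | q != p) alpha_pq A w p q.

Definition colnorm n (v : 'cV[R]_n) : R := Num.sqrt (\sum_(k < n) v k 0 ^+ 2).

Definition beta n (A : 'M[R]_n) : R :=
  let mx := \big[Num.max/0]_(p < n) \big[Num.max/0]_(q < n | q != p)
              ((unitv p)^T *m Xmx A *m unitv q) 0 0 in
  Num.max (\big[Num.max/0]_(p < n) \big[Num.max/0]_(q < n | q != p)
              (2 * ((unitv p)^T *m Xmx A *m unitv q) 0 0))
          (mx + \big[Num.max/0]_(q < n) colnorm (Xmx A *m unitv q)).

Definition gamma n (A : 'M[R]_n) : R :=
  \big[Num.max/0]_(k < n) ((unitv k)^T *m (Xmx A)^T *m Xmx A *m unitv k) 0 0.

Definition gammabar n m (A : 'M[R]_n) (B : 'M[R]_(n, m)) : R :=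
  \big[Num.max/0]_(k < n)
     ((unitv k)^T *m Xmx A *m absmx B *m (absmx B)^T *m (Xmx A)^T *m unitv k) 0 0.

End Defs.
Arguments unitv {R n} k.

(* Main.v *)
Require Import Defs.
From HB Require Import structures.
From mathcomp Require Import all_boot all_order all_algebra.
From mathcomp Require Import boolp classical_sets reals.
From mathcomp Require Import complex.
From mathcomp Require Import lra ring.
Import Order.TTheory GRing.Theory Num.Theory.
Set Implicit Arguments. Unset Strict Implicit. Unset Printing Implicit Defensive.
Local Open Scope ring_scope.

Lemma normC_real (R : realType) (x : R) : `|x%:C%C| = `|x|%:C%C.
Proof.
rewrite normc_def /= expr0n /= addr0 sqrtr_sqr //.
Qed.

Lemma eig_bound (R : realType) n (N : 'M[R]_n) (lam : R[i]) :
  eigenvalue (map_mx (fun x : R => x%:C%C) N) lam ->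
  `|lam| <= (\sum_k \sum_l `|N k l|)%:C%C.
Proof.
move=> /eigenvalueP [v hv vn0].
set K := \sum_k \sum_l `|N k l|.
have Kge : forall k l, `|N k l| <= K.
  move=> k l; rewrite /K (bigD1 k) //= (bigD1 l) //= -addrA lerDl.
  by rewrite addr_ge0 ?sumr_ge0 // => *; rewrite sumr_ge0.
set S := \sum_l `|v 0 l|.
have Spos : 0 < S.
  have [l hl] : exists l, v 0 l != 0.
    apply/existsP; apply: contraR vn0 => /existsPn h; apply/eqP/matrixP => a b.
    by rewrite ord1 mxE; apply/eqP; have := h b; rewrite negbK.
  rewrite /S (bigD1 l) //= ltr_pwDl ?normr_gt0 //.
  by rewrite sumr_ge0.
have : `|lam| * S <= K%:C%C * S.
  rewrite /S mulr_sumr mulr_sumr.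
  apply: (le_trans (y := \sum_l \sum_k `|v 0 k| * `|N k l|%:C%C)).
    apply: ler_sum => l _.
    have := congr1 (fun M : 'M_(1,n) => M 0 l) hv; rewrite !mxE => e.
    rewrite -normrM -e.
    apply: (le_trans (ler_norm_sum _ _ _)).
    by apply: ler_sum => k _; rewrite !mxE normrM normC_real.
  rewrite exchange_big /=.
  apply: ler_sum => k _.
  rewrite -mulr_sumr mulrC ler_wpM2r //.
  rewrite /K -rmorph_sum lecR.
  apply: (le_trans (y := \sum_l \sum_k0 `|N k0 l|)); last first.
    by rewrite exchange_big.
  by apply: ler_sum => l _; rewrite (bigD1 k) //= lerDl sumr_ge0.
by rewrite ler_pM2r.
Qed.

Lemma sr_ge (R : realType) n (N : 'M[R]_n) (r : R) (v : 'rV[R]_n) :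
  v != 0 -> v *m N = r *: v -> 0 <= r -> r <= spectral_radius N.
Proof.
move=> vn0 hv r0.
rewrite /spectral_radius.
apply: ub_le_sup.
  exists (\sum_k \sum_l `|N k l|) => x [lam [hl hx]].
  rewrite -lecR hx; exact: eig_bound hl.
exists (r%:C%C); split; last by rewrite normC_real ger0_norm.
apply/eigenvalueP; exists (map_mx (real_complex R) v).
  have -> : map_mx (fun x : R => x%:C%C) N = map_mx (real_complex R) N by [].
  by rewrite -map_mxM hv map_mxZ.
by rewrite map_mx_eq0.
Qed.

Lemma sr_unit (R : realType) n (N : 'M[R]_n) s :
  spectral_radius N < 1 -> 0 <= s <= 1 -> (1%:M - s *: N) \in unitmx.
Proof.
move=> hsr /andP [s0 s1].
rewrite unitmxE unitfE; apply/negP => /det0P [v vn0 hv].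
have e : v = s *: (v *m N).
  by apply/eqP; rewrite -subr_eq0 scalemxAr -{1}(mulmx1 v) -mulmxBr hv.
have sn0 : s != 0.
  by apply: contra vn0 => /eqP s0'; rewrite e s0' scale0r.
have hv' : v *m N = s^-1 *: v.
  by rewrite {2}e scalerA mulVf // scale1r.
have h := @sr_ge R n N s^-1 v vn0 hv' (ltac:(by rewrite invr_ge0)).
have : 1 <= s^-1 by rewrite invf_ge1 // lt_neqAle eq_sym sn0 s0.
move=> h1; have := le_trans h1 h; rewrite leNgt hsr //.
Qed.

Definition nn (R : realType) m n (M : 'M[R]_(m,n)) := forall i j, 0 <= M i j.
Definition mu (R : realType) m n (M : 'M[R]_(m,n)) : R := \sum_i \sum_j `|M i j|.

Lemma le_sum1 (R : realType) (I : finType) (F : I -> R) a :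
  (forall i, 0 <= F i) -> F a <= \sum_i F i.
Proof. by move=> h; rewrite (bigD1 a) //= lerDl sumr_ge0. Qed.

Lemma mu_ge0 (R : realType) m n (M : 'M[R]_(m,n)) : 0 <= mu M.
Proof. by rewrite /mu; apply: sumr_ge0 => i _; apply: sumr_ge0. Qed.

Lemma mu_entry (R : realType) m n (M : 'M[R]_(m,n)) i j : `|M i j| <= mu M.
Proof.
apply: (le_trans (y := \sum_j `|M i j|)); first exact: le_sum1.
by apply: (le_sum1 (F := fun i => \sum_j `|M i j|)) => k; apply: sumr_ge0.
Qed.

Lemma mu_row (R : realType) m n (M : 'M[R]_(m,n)) i : \sum_j `|M i j| <= mu M.
Proof. by apply: (le_sum1 (F := fun i => \sum_j `|M i j|)) => k; apply: sumr_ge0. Qed.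

Lemma mu_mul (R : realType) m n p (P : 'M[R]_(m,n)) (Q : 'M[R]_(n,p)) :
  mu (P *m Q) <= mu P * mu Q.
Proof.
rewrite /mu.
apply: (le_trans (y := \sum_i \sum_j \sum_k `|P i k| * `|Q k j|)).
  apply: ler_sum => i _; apply: ler_sum => j _; rewrite mxE.
  apply: (le_trans (ler_norm_sum _ _ _)).
  by apply: ler_sum => k _; rewrite normrM.
rewrite mulr_suml; apply: ler_sum => i _.
rewrite exchange_big /= mulr_suml; apply: ler_sum => k _.
rewrite -mulr_sumr ler_wpM2l //.
exact: (mu_row Q k).
Qed.

Lemma mu_add (R : realType) m n (P Q : 'M[R]_(m,n)) : mu (P + Q) <= mu P + mu Q.
Proof.
rewrite /mu -big_split /=; apply: ler_sum => i _.
rewrite -big_split /=; apply: ler_sum => j _; rewrite mxE; exact: ler_normD.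
Qed.

Lemma mu_scale (R : realType) m n (a : R) (P : 'M[R]_(m,n)) : mu (a *: P) = `|a| * mu P.
Proof.
rewrite /mu mulr_sumr; apply: eq_bigr => i _; rewrite mulr_sumr.
by apply: eq_bigr => j _; rewrite mxE normrM.
Qed.

Lemma nn_mul (R : realType) m n p (P : 'M[R]_(m,n)) (Q : 'M[R]_(n,p)) :
  nn P -> nn Q -> nn (P *m Q).
Proof. by move=> hP hQ i j; rewrite mxE sumr_ge0 // => k _; rewrite mulr_ge0. Qed.

Lemma series_nn (R : realType) n p (Q : 'M[R]_n) (Y0 Y : 'M[R]_(n,p)) :
  nn Q -> nn Y0 -> Y = Y0 + Q *m Y -> (forall l, \sum_k Q l k <= 2^-1) -> nn Y.
Proof.
move=> hQ hY0 hY hrow.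
set c := mu Y.
have key : forall K : nat, forall l m, - (c / 2 ^+ K) <= Y l m.
  elim=> [|K IH] l m.
    rewrite expr0 divr1 lerNl; apply: le_trans (mu_entry Y l m).
    by rewrite -normrN ler_norm.
  rewrite hY !mxE.
  apply: (le_trans (y := \sum_k Q l k * (- (c / 2 ^+ K)))); last first.
    rewrite -[X in X <= _]add0r; apply: lerD; first exact: hY0.
    by apply: ler_sum => k _; apply: ler_wpM2l; [exact: hQ | exact: IH].
  rewrite -mulr_suml.
  have c0 : 0 <= c / 2 ^+ K by rewrite divr_ge0 ?mu_ge0 // exprn_ge0.
  rewrite mulrN lerN2.
  have -> : c / 2 ^+ K.+1 = 2^-1 * (c / 2 ^+ K) by rewrite exprS invfM mulrCA.
  by rewrite ler_wpM2r.
move=> l m; rewrite leNgt; apply/negP => hneg.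
set d := - Y l m.
have d0 : 0 < d by rewrite /d oppr_gt0.
have [K hK] : exists K : nat, c / d < K%:R.
  exists (Num.bound (c / d)); apply: archi_boundP.
  by rewrite divr_ge0 ?mu_ge0 // ltW.
have hK2 : (K%:R : R) <= 2 ^+ K.
  rewrite -natrX ler_nat; exact: ltnW (ltn_expl K (isT : 1 < 2)%N).
have := key K l m.
rewrite lerNl -/d.
have p2 : 0 < (2 : R) ^+ K by rewrite exprn_gt0.
rewrite ler_pdivlMr // => h.
have : c < d * 2 ^+ K.
  have h2 := lt_le_trans hK hK2.
  by rewrite ltr_pdivrMr // mulrC in h2.
by rewrite ltNge h.
Qed.

Definition Xs (R : realType) n (N : 'M[R]_n) (s : R) := invmx (1%:M - s *: N).

Lemma resolvent (R : realType) n (N : 'M[R]_n) s u :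
  (1%:M - s *: N) \in unitmx -> (1%:M - u *: N) \in unitmx ->
  Xs N u = Xs N s + (u - s) *: (Xs N s *m N *m Xs N u).
Proof.
move=> us uu.
have h1 : Xs N s *m (1%:M - s *: N) = 1%:M by rewrite /Xs mulVmx.
have h2 : (1%:M - u *: N) *m Xs N u = 1%:M by rewrite /Xs mulmxV.
rewrite -{1}[Xs N u]mul1mx -h1.
have -> : 1%:M - s *: N = (1%:M - u *: N) + (u - s) *: N.
  by rewrite scalerBl addrA subrK.
rewrite mulmxDr mulmxDl -mulmxA h2 mulmx1; congr (_ + _).
by rewrite -scalemxAr -scalemxAl.
Qed.

Lemma local_step (R : realType) n (N : 'M[R]_n) s e u :
  nn N -> spectral_radius N < 1 ->
  0 <= s <= 1 -> 0 <= e <= 1 -> 0 <= u <= 1 -> e <= u ->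
  `|e - s| <= (8 * (mu (Xs N s) * mu N + 1))^-1 ->
  `|u - s| <= (8 * (mu (Xs N s) * mu N + 1))^-1 ->
  nn (Xs N e) -> nn (Xs N u).
Proof.
move=> hN hsr hs he hu heu hes hus hXe.
have us := sr_unit hsr hs; have ue := sr_unit hsr he; have uu := sr_unit hsr hu.
set a := mu (Xs N s) * mu N.
have a0 : 0 <= a by rewrite mulr_ge0 ?mu_ge0.
set r := (8 * (a + 1))^-1.
have r0 : 0 <= r by rewrite invr_ge0 mulr_ge0 // addr_ge0.
have ra : r * a <= 8^-1.
  rewrite /r invfM -mulrA ler_piMr ?invr_ge0 //.
  have a1 : 0 < a + 1 by lra.
  by rewrite mulrC ler_pdivrMr // mul1r lerDl.
have hbe : mu (Xs N e) <= 2 * mu (Xs N s).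
  have := resolvent us ue => E.
  have : mu (Xs N e) <= mu (Xs N s) + 8^-1 * mu (Xs N e).
    rewrite {1}E; apply: (le_trans (mu_add _ _)); rewrite lerD2l mu_scale.
    apply: (le_trans (y := `|e - s| * (mu (Xs N s) * mu N * mu (Xs N e)))).
      apply: ler_wpM2l => //.
      apply: (le_trans (mu_mul _ _)); apply: ler_wpM2r; first exact: mu_ge0.
      exact: mu_mul.
    rewrite mulrA; apply: ler_wpM2r; first exact: mu_ge0.
    by apply: le_trans ra; apply: ler_wpM2r.
  have := mu_ge0 (Xs N e); have := mu_ge0 (Xs N s).
  move=> *; nra.
have E := resolvent ue uu.
apply: (series_nn (Q := (u - e) *: (Xs N e *m N)) (Y0 := Xs N e)) => //.
- move=> i j; rewrite mxE mulr_ge0 ?subr_ge0 //.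
  exact: nn_mul.
- by rewrite {1}E scalemxAl.
- move=> l.
  apply: (le_trans (y := mu ((u - e) *: (Xs N e *m N)))).
    apply: le_trans (mu_row _ l); apply: ler_sum => k _; exact: ler_norm.
  rewrite mu_scale.
  apply: (le_trans (y := (2 * r) * (2 * a))).
    apply: ler_pM; rewrite ?normr_ge0 ?mu_ge0 //.
    + have : `|u - e| <= `|u - s| + `|e - s|.
        by rewrite -(normrN (e - s)) (_ : u - e = (u - s) + - (e - s)) ?ler_normD // opprB addrA subrK.
      move=> h; apply: le_trans h _. by rewrite mulr2n mulrDl mul1r lerD.
    + apply: le_trans (mu_mul _ _) _; rewrite /a mulrA [2 * _]mulrC.
      by apply: ler_wpM2r; rewrite ?mu_ge0 // mulrC.
  have : r * a <= 8^-1 := ra.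
  move=> h; have -> : 2 * r * (2 * a) = 4 * (r * a) by ring.
  have -> : (2 : R)^-1 = 4 * 8^-1 by field.
  by apply: ler_wpM2l.
Qed.

Lemma nn_inv (R : realType) n (N : 'M[R]_n) :
  nn N -> spectral_radius N < 1 -> nn (Xs N 1).
Proof.
move=> hN hsr.
set E := (fun s : R => 0 <= s <= 1 /\ forall u, 0 <= u <= s -> nn (Xs N u)) : set R.
have E0 : E 0.
  split; first by rewrite lexx ler01.
  move=> u /andP [u0 u1]; have -> : u = 0 by apply/eqP; rewrite eq_le u1 u0.
  rewrite /Xs scale0r subr0 invmx1 => i j; rewrite mxE; case: (i == j) => //=.
have Ene : (E !=set0)%classic by exists 0.
have Eub : ubound E 1 by move=> x [/andP [_ ?] _].
have hs : has_sup E by split => //; exists 1.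
set s := sup E.
have s0 : 0 <= s by apply: sup_upper_bound.
have s1 : s <= 1 by apply: ge_sup.
set r := (8 * (mu (Xs N s) * mu N + 1))^-1.
have r0 : 0 < r.
  rewrite invr_gt0 mulr_gt0 // ltr_pwDr // mulr_ge0 ?mu_ge0 //.
have [e Ee he] := sup_adherent r0 hs.
have es : e <= s by apply: sup_upper_bound.
have he2 : s - r < e by exact: he.
set t := Num.min 1 (s + r).
have Et : E t.
  have t0 : 0 <= t by rewrite le_min ler01 addr_ge0 // ltW.
  have t1 : t <= 1 by rewrite ge_min lexx.
  split; first by rewrite t0 t1.
  move=> u /andP [u0 ut].
  have [ue|eu] := leP u e.
    by case: Ee => _; apply; rewrite u0 ue.
  case: Ee => /andP [e0 e1] hE.
  have u1 : u <= 1 by apply: le_trans t1.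
  have usr : u <= s + r by apply: le_trans ut _; rewrite ge_min lexx orbT.
  apply: (@local_step R n N s e u) => //.
  - by rewrite s0 s1.
  - by rewrite e0 e1.
  - by rewrite u0 u1.
  - exact: ltW.
  - by rewrite -/r ler_norml; apply/andP; split; lra.
  - by rewrite -/r ler_norml; apply/andP; split; lra.
  - by apply: hE; rewrite e0 lexx.
have ts : t <= s by apply: sup_upper_bound.
case: Et => _ hEt; apply: hEt.
rewrite ler01 /= /t le_min lexx /=.
move: ts; rewrite /t ge_min => /orP [h|h]; lra.
Qed.

Lemma nn_id (R : realType) n : nn (1%:M : 'M[R]_n).
Proof. by move=> i j; rewrite mxE; case: (i == j). Qed.

Lemma nn_exp (R : realType) n (N : 'M[R]_n) t : nn N -> nn (N ^+ t).
Proof.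
move=> hN; elim: t => [|t IH]; first by rewrite expr0 -idmxE; exact: nn_id.
by rewrite exprS -mulmxE; apply: nn_mul.
Qed.

Lemma X_expand (R : realType) n (N : 'M[R]_n) (X : 'M[R]_n) :
  (1%:M - N) *m X = 1%:M -> forall K, X = \sum_(t < K) N ^+ t + N ^+ K *m X.
Proof.
move=> h.
have e : X = 1%:M + N *m X.
  by move: h; rewrite mulmxBl mul1mx => /eqP; rewrite subr_eq => /eqP.
elim=> [|K IH]; first by rewrite big_ord0 add0r expr0 -idmxE mul1mx.
rewrite {1}IH big_ord_recr /= -addrA; congr (_ + _).
by rewrite {1}e mulmxDr mulmx1 exprSr -mulmxE mulmxA.
Qed.

Lemma X_ge_sum (R : realType) n (N X : 'M[R]_n) :
  nn N -> (1%:M - N) *m X = 1%:M -> nn X ->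
  forall T l m, (\sum_(t < T) N ^+ t) l m <= X l m.
Proof.
move=> hN h hX T l m.
rewrite {1}(X_expand h T) mxE lerDl.
by apply: nn_mul => //; apply: nn_exp.
Qed.

Lemma abs_mul_le (R : realType) m n p (P P' : 'M[R]_(m,n)) (Q Q' : 'M[R]_(n,p)) :
  (forall i j, `|P i j| <= P' i j) -> (forall i j, `|Q i j| <= Q' i j) ->
  forall i j, `|(P *m Q) i j| <= (P' *m Q') i j.
Proof.
move=> hP hQ i j; rewrite !mxE.
apply: (le_trans (ler_norm_sum _ _ _)); apply: ler_sum => k _.
by rewrite normrM ler_pM.
Qed.

Lemma abs_exp_le (R : realType) n (Z N : 'M[R]_n) :
  (forall i j, `|Z i j| <= N i j) -> forall t i j, `|(Z ^+ t) i j| <= (N ^+ t) i j.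
Proof.
move=> h; elim=> [|t IH] i j; first by rewrite !expr0 -idmxE mxE ger0_norm // ?(nn_id R n).
rewrite !exprS -!mulmxE; exact: abs_mul_le.
Qed.

Lemma tr_mulT (R : realType) n m (P : 'M[R]_(n,m)) :
  \tr (P *m P^T) = \sum_k \sum_c (P k c) ^+ 2.
Proof.
rewrite /mxtrace; apply: eq_bigr => k _; rewrite mxE; apply: eq_bigr => c _.
by rewrite mxE expr2.
Qed.

Lemma sumsq_le (R : realType) T (b : 'I_T -> R) :
  (forall t, 0 <= b t) -> \sum_t b t ^+ 2 <= (\sum_t b t) ^+ 2.
Proof.
move=> hb; rewrite expr2 mulr_suml; apply: ler_sum => t _.
rewrite expr2 ler_wpM2l //; exact: le_sum1.
Qed.

Lemma gram_tr_le (R : realType) n m T (Z N X : 'M[R]_n) (B : 'M[R]_(n,m)) :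
  nn N -> (forall i j, `|Z i j| <= N i j) ->
  (forall l k, (\sum_(t < T) N ^+ t) l k <= X l k) ->
  \tr (gramian T Z B) <= \sum_k \sum_c ((X *m absmx B) k c) ^+ 2.
Proof.
move=> hN hZ hX.
have hB : nn (absmx B) by move=> i j; rewrite mxE.
have eg : gramian T Z B = \sum_(t < T) ((Z ^+ t *m B) *m (Z ^+ t *m B)^T).
  by rewrite /gramian; apply: eq_bigr => t _; rewrite trmx_mul !mulmxA.
rewrite eg /mxtrace.
under eq_bigr do rewrite summxE.
rewrite exchange_big /=.
apply: (le_trans (y := \sum_(t < T) \sum_(k < n) \sum_(c < m) ((N ^+ t *m absmx B) k c) ^+ 2)).
  apply: ler_sum => t _; rewrite -/(mxtrace _) tr_mulT.
  apply: ler_sum => k _; apply: ler_sum => c _.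
  rewrite -real_normK ?num_real //; apply: lerXn2r.
  - by rewrite nnegrE normr_ge0.
  - by rewrite nnegrE; apply: nn_mul => //; apply: nn_exp.
  - apply: abs_mul_le; first exact: abs_exp_le.
    by move=> i j; rewrite mxE.
rewrite exchange_big /=; apply: ler_sum => k _.
rewrite exchange_big /=; apply: ler_sum => c _.
apply: le_trans (@sumsq_le R T (fun t : 'I_T => (N ^+ t *m absmx B) k c) _) _.
  by move=> t; apply: nn_mul => //; apply: nn_exp.
have e2 : \sum_(t < T) (N ^+ t *m absmx B) k c = ((\sum_(t < T) N ^+ t) *m absmx B) k c.
  by rewrite mulmx_suml summxE.
rewrite e2; apply: lerXn2r.
- rewrite nnegrE; apply: nn_mul => // i j; rewrite summxE sumr_ge0 // => t _.
  exact: nn_exp.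
- rewrite nnegrE; apply: (le_trans (y := ((\sum_(t < T) N ^+ t) *m absmx B) k c)).
    apply: nn_mul => // i j; rewrite summxE sumr_ge0 // => t _; exact: nn_exp.
  rewrite !mxE; apply: ler_sum => l _; apply: ler_wpM2r; [exact: hB | exact: hX].
- rewrite !mxE; apply: ler_sum => l _; apply: ler_wpM2r; [exact: hB | exact: hX].
Qed.

Lemma unitv_entry (R : realType) n (M : 'M[R]_n) p q :
  ((unitv p)^T *m M *m unitv q) 0 0 = M p q.
Proof. by rewrite /unitv trmx_delta -rowE -colE !mxE. Qed.

Lemma amhm (R : realType) n (d : 'I_n -> R) :
  (forall k, 0 < d k) -> (n ^ 2)%:R <= (\sum_k (d k)^-1) * (\sum_k d k).
Proof.
move=> hd.
have key : 2 * ((\sum_k (d k)^-1) * (\sum_k d k)) =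
           \sum_k \sum_l (d l / d k + d k / d l).
  rewrite mulr2n mulrDl mul1r {1}mulr_suml.
  rewrite [X in _ + X]mulrC mulr_suml.
  rewrite -big_split /=; apply: eq_bigr => k _.
  rewrite mulr_sumr mulr_sumr -big_split /=.
  by apply: eq_bigr => l _; rewrite mulrC.
have : 2 * (n ^ 2)%:R <= \sum_(k < n) \sum_(l < n) (d l / d k + d k / d l).
  apply: (le_trans (y := \sum_(k < n) \sum_(l < n) (2 : R))).
    rewrite sumr_const sumr_const card_ord -mulr_natr -mulr_natr.
    by rewrite -mulrnA mulnn mulr_natr.
  apply: ler_sum => k _; apply: ler_sum => l _.
  have hk := hd k; have hl := hd l.
  rewrite -(ler_pM2r (mulr_gt0 hk hl)) mulrDl.
  have hk0 : d k != 0 by rewrite gt_eqF.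
  have hl0 : d l != 0 by rewrite gt_eqF.
  have -> : (d l / d k + d k / d l) * (d k * d l) = d l * d l + d k * d k.
    by field; rewrite hk0 hl0.
  have := sqr_ge0 (d l - d k); rewrite !mul1r; nra.
rewrite -key => h; lra.
Qed.

Lemma posdef_unit (R : realType) n (W : 'M[R]_n) : posdef W -> W \in unitmx.
Proof.
move=> [hs hp]; rewrite unitmxE unitfE; apply/negP => /det0P [v vn0 hv].
have := hp (v^T); rewrite trmx_eq0 => /(_ vn0); rewrite trmxK hv mul0mx mxE ltxx //.
Qed.

Lemma posdef_diag (R : realType) n (W : 'M[R]_n) k : posdef W -> 0 < W k k.
Proof.
move=> [hs hp]; have := hp (unitv k); rewrite unitv_entry; apply.
by apply/eqP => /matrixP /(_ k 0); rewrite !mxE !eqxx /= => /eqP; rewrite oner_eq0.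
Qed.

Lemma posdef_ge0 (R : realType) n (W : 'M[R]_n) (x : 'cV[R]_n) : posdef W -> 0 <= (x^T *m W *m x) 0 0.
Proof.
move=> [hs hp]; have [->|xn0] := eqVneq x 0; first by rewrite mulmx0 mxE.
exact: ltW (hp x xn0).
Qed.

Lemma posdef_inv_diag (R : realType) n (W : 'M[R]_n) k :
  posdef W -> 1 <= W k k * (invmx W) k k.
Proof.
move=> hW.
have uW := posdef_unit hW.
have Wk := posdef_diag k hW.
set e := (unitv k : 'cV[R]_n).
set y := invmx W *m e.
set t := (W k k)^-1.
have Wy : W *m y = e by rewrite /y mulmxA mulmxV // mul1mx.
have yW : y^T *m W = e^T by case: hW => hs _; rewrite -{1}hs -trmx_mul Wy.
have ee : (e^T *m e) 0 0 = 1.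
  by rewrite -[e^T]mulmx1 unitv_entry mxE eqxx.
have q := posdef_ge0 (y - t *: e) hW.
have eT : (y - t *: e)^T = y^T - t *: e^T by rewrite linearB linearZ.
have eWe : (e^T *m W *m e) 0 0 = W k k by rewrite unitv_entry.
have eWy : (e^T *m W *m y) 0 0 = 1 by rewrite -mulmxA Wy ee.
have yWe : (y^T *m W *m e) 0 0 = 1 by rewrite yW ee.
have yWy : (y^T *m W *m y) 0 0 = invmx W k k.
  by rewrite yW /y mulmxA unitv_entry.
rewrite eT !mulmxBl !mulmxBr -!scalemxAl -!scalemxAr in q.
rewrite (mx11_scalar (y^T *m W *m y)) (mx11_scalar (y^T *m W *m e)) in q.
rewrite (mx11_scalar (e^T *m W *m y)) (mx11_scalar (e^T *m W *m e)) in q.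
rewrite eWe eWy yWe yWy !mxE !eqxx !mulr1n in q.
have -> : W k k * invmx W k k = 1 + W k k * (invmx W k k - t).
  by rewrite mulrBr /t mulfV ?gt_eqF // addrC subrK.
rewrite lerDl; apply: mulr_ge0; first exact: ltW.
have tw : t * W k k = 1 by rewrite /t mulVf ?gt_eqF.
move: q; rewrite tw !mulr1.
move=> *; lra.
Qed.

Lemma posdef_tr (R : realType) n (W : 'M[R]_n) :
  (0 < n)%N -> posdef W -> (n ^ 2)%:R / \tr W <= \tr (invmx W) /\ 0 < \tr W.
Proof.
move=> n0 hW.
have hd : forall k, 0 < W k k by move=> k; exact: posdef_diag.
have trp : 0 < \tr W.
  rewrite /mxtrace (bigD1 (Ordinal n0)) //= ltr_pwDl ?hd //.
  by rewrite sumr_ge0 // => k _; apply: ltW.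
split => //.
apply: (le_trans (y := \sum_k (W k k)^-1)).
  by rewrite ler_pdivrMr // amhm.
rewrite /mxtrace; apply: ler_sum => k _.
have := posdef_inv_diag k hW.
by rewrite -ler_pdivrMl ?hd // mulr1.
Qed.

Lemma le_bigmax0 (R : realType) (I : finType) (P : pred I) (F : I -> R) a :
  P a -> F a <= \big[Num.max/0]_(p | P p) F p.
Proof. by move=> Pa; rewrite (bigD1 a) //= le_max lexx. Qed.

Lemma bigmax0_ge0 (R : realType) (I : finType) (P : pred I) (F : I -> R) :
  0 <= \big[Num.max/0]_(p | P p) F p.
Proof. by elim/big_rec: _ => // k x _ hx; rewrite le_max hx orbT. Qed.

Lemma dsum (R : realType) (I : finType) (P : pred I) (f g : I -> R) :
  \sum_(k | P k) \sum_(l | P l) f k * g l = (\sum_(k | P k) f k) * (\sum_(l | P l) g l).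
Proof. by rewrite mulr_suml; apply: eq_bigr => k _; rewrite mulr_sumr. Qed.

Lemma cauchy_schwarz (R : realType) (I : finType) (P : pred I) (F G : I -> R) :
  (\sum_(k | P k) F k * G k) ^+ 2 <= (\sum_(k | P k) F k ^+ 2) * (\sum_(k | P k) G k ^+ 2).
Proof.
have h : 0 <= \sum_(k | P k) \sum_(l | P l) (F k * G l - F l * G k) ^+ 2.
  by apply: sumr_ge0 => k _; apply: sumr_ge0 => l _; apply: sqr_ge0.
have e1 : forall k l, (F k * G l - F l * G k) ^+ 2 =
     F k ^+ 2 * G l ^+ 2 + G k ^+ 2 * F l ^+ 2 - 2 * ((F k * G k) * (F l * G l)).
  by move=> k l; ring.
have e : \sum_(k | P k) \sum_(l | P l) (F k * G l - F l * G k) ^+ 2 =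
   \sum_(k | P k) \sum_(l | P l) F k ^+ 2 * G l ^+ 2
   + \sum_(k | P k) \sum_(l | P l) G k ^+ 2 * F l ^+ 2
   - 2 * \sum_(k | P k) \sum_(l | P l) (F k * G k) * (F l * G l).
  rewrite mulr_sumr -big_split -sumrB /=; apply: eq_bigr => k _.
  rewrite mulr_sumr -big_split -sumrB /=; apply: eq_bigr => l _.
  exact: e1.
rewrite e !dsum in h.
rewrite [X in _ <= X]mulrC expr2; lra.
Qed.

Lemma cross_bound (R : realType) n m (V : 'M[R]_(n,m)) (x : 'I_n -> R) i :
  nn V -> (forall k, 0 <= x k) ->
  2 * (\sum_k \sum_c V k c * x k * V i c) <=
    (x i + Num.sqrt (\sum_k x k ^+ 2)) * \sum_k \sum_c V k c ^+ 2.
Proof.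
move=> hV hx.
set p := x i.
set q2 := \sum_(k | k != i) x k ^+ 2.
set s := Num.sqrt (\sum_k x k ^+ 2).
have hsum : \sum_k x k ^+ 2 = p ^+ 2 + q2 by rewrite (bigD1 i).
have q20 : 0 <= q2 by apply: sumr_ge0 => k _; apply: sqr_ge0.
have p0 : 0 <= p := hx i.
have s0 : 0 <= s := sqrtr_ge0 _.
have s2 : s ^+ 2 = p ^+ 2 + q2 by rewrite /s sqr_sqrtr hsum // addr_ge0 ?sqr_ge0.
have sp : p <= s.
  have : p ^+ 2 <= s ^+ 2 by rewrite s2 lerDl.
  by rewrite ler_sqr ?nnegrE.
set a0 := \sum_c V i c ^+ 2.
set b0 := \sum_(k | k != i) \sum_c V k c ^+ 2.
have a00 : 0 <= a0 by apply: sumr_ge0 => c _; apply: sqr_ge0.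
have b00 : 0 <= b0 by apply: sumr_ge0 => k _; apply: sumr_ge0 => c _; apply: sqr_ge0.
have hS0 : \sum_k \sum_c V k c ^+ 2 = a0 + b0 by rewrite (bigD1 i).
set y := fun c => \sum_(k | k != i) x k * V k c.
set z := \sum_c V i c * y c.
have hS1 : \sum_k \sum_c V k c * x k * V i c = p * a0 + z.
  rewrite exchange_big /= /a0 /z mulr_sumr -big_split /=; apply: eq_bigr => c _.
  rewrite (bigD1 i) //= /y mulr_sumr -/p; congr (_ + _).
    by rewrite expr2 [V i c * p]mulrC mulrA.
  by apply: eq_bigr => k _; rewrite mulrC [V k c * _]mulrC mulrA.
set Y2 := \sum_c y c ^+ 2.
have Y20 : 0 <= Y2 by apply: sumr_ge0 => c _; apply: sqr_ge0.
have hY2 : Y2 <= q2 * b0.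
  rewrite /b0 exchange_big /= mulr_sumr; apply: ler_sum => c _.
  exact: cauchy_schwarz.
have hz : z ^+ 2 <= a0 * Y2 by exact: cauchy_schwarz.
have hq : 0 <= \sum_c ((s - p) * V i c - y c) ^+ 2.
  by apply: sumr_ge0 => c _; apply: sqr_ge0.
have eq : \sum_c ((s - p) * V i c - y c) ^+ 2 = (s - p) ^+ 2 * a0 - 2 * (s - p) * z + Y2.
  rewrite /a0 /z /Y2 mulr_sumr mulr_sumr -sumrB -big_split /=.
  by apply: eq_bigr => c _; ring.
rewrite eq in hq.
have hq2 : q2 = (s - p) * (s + p).
  by rewrite -subr_sqr s2 addrC addKr.
have key : 2 * z <= (s - p) * a0 + (s + p) * b0.
  have [hlt|heq] := ltrP p s.
    have sp0 : 0 < s - p by rewrite subr_gt0.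
    rewrite -(ler_pM2l sp0).
    have h : Y2 <= (s - p) * (s + p) * b0 by rewrite -hq2.
    nra.
  have pe : p = s by apply/eqP; rewrite eq_le sp heq.
  have q0 : q2 = 0 by rewrite hq2 pe subrr mul0r.
  have : z ^+ 2 <= 0.
    apply: le_trans hz _; rewrite -(mulr0 a0) ler_wpM2l //.
    by apply: le_trans hY2 _; rewrite q0 mul0r.
  move=> hz0.
  have -> : z = 0 by apply/eqP; rewrite -sqrf_eq0 eq_le hz0 sqr_ge0.
  by rewrite mulr0 addr_ge0 // mulr_ge0 // ?subr_ge0 // addr_ge0.
rewrite hS1 hS0; lra.
Qed.

Lemma XEX_entry (R : realType) n (X Y : 'M[R]_n) i j k l :
  (X *m (unitv j *m (unitv i)^T) *m Y) k l = X k j * Y i l.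
Proof.
rewrite mulmxA -mulmxA /unitv trmx_delta -colE -rowE mxE big_ord1 !mxE.
by [].
Qed.

Lemma addscale_entry (R : realType) m n (A B : 'M[R]_(m,n)) (a : R) k l :
  (A + a *: B) k l = A k l + a * B k l.
Proof. by rewrite !mxE. Qed.

Lemma sm (R : realType) n (N : 'M[R]_n) (w : R) i j (X X' : 'M[R]_n) :
  (1%:M - N) \in unitmx -> X = invmx (1%:M - N) -> nn X ->
  (1%:M - (N + `|w| *: (unitv j *m (unitv i)^T))) *m X' = 1%:M -> nn X' ->
  0 < 1 - `|w| * X i j /\
  forall k l, X' k l = X k l + `|w| / (1 - `|w| * X i j) * X k j * X i l.
Proof.
move=> hu hX nX h nX'.
pose E := (unitv j *m (unitv i)^T : 'M[R]_n).
change ((1%:M - (N + `|w| *: E)) *m X' = 1%:M) in h.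
have h1 : (1%:M - N) *m X' = 1%:M + `|w| *: (E *m X').
  rewrite opprD addrA mulmxDl mulNmx -scalemxAl in h; move/eqP: h.
  by rewrite subr_eq => /eqP.
have e1 : X' = X + `|w| *: (X *m E *m X').
  rewrite -[X' in LHS]mul1mx -(mulVmx hu) -hX -(mulmxA X (1%:M - N) X') h1 mulmxDr mulmx1.
  by rewrite -scalemxAr mulmxA.
have e2 : forall k l, X' k l = X k l + `|w| * (X k j * X' i l).
  by move=> k l; rewrite {1}e1 addscale_entry /E XEX_entry.
set c := 1 - `|w| * X i j.
have e3 : forall l, c * X' i l = X i l.
  by move=> l; apply/eqP; rewrite /c mulrBl mul1r subr_eq {1}e2 mulrA.
have cn0 : c != 0.
  apply/negP => /eqP c0.
  have Xi0 : forall l, X i l = 0 by move=> l; rewrite -e3 c0 mul0r.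
  have : (X *m (1%:M - N)) i i = 1 by rewrite hX mulVmx // mxE eqxx.
  rewrite mxE big1 ?(@oner_eq0 R) // => [/esym/eqP|l _]; first by rewrite oner_eq0.
  by rewrite Xi0 mul0r.
have c0 : 0 < c.
  rewrite lt_neqAle eq_sym cn0 /=.
  rewrite leNgt; apply/negP => cneg.
  have : X i j <= 0 by rewrite -e3 nmulr_rle0 //.
  move=> hle; have Xij0 : X i j = 0 by apply/eqP; rewrite eq_le hle nX.
  by move: cneg; rewrite /c Xij0 mulr0 subr0 ltr10.
split => // k l.
rewrite e2; congr (_ + _).
have -> : X' i l = X i l / c by rewrite -e3 [c * _]mulrC mulfK.
by rewrite /c; field; rewrite -/c cn0.
Qed.

Lemma expand_sq (R : realType) n m (V : 'M[R]_(n,m)) (x : 'I_n -> R) i a :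
  \sum_k \sum_c (V k c + a * x k * V i c) ^+ 2 =
  \sum_k \sum_c V k c ^+ 2 + 2 * a * (\sum_k \sum_c V k c * x k * V i c)
  + a ^+ 2 * ((\sum_k x k ^+ 2) * (\sum_c V i c ^+ 2)).
Proof.
rewrite mulr_suml !mulr_sumr -!big_split /=; apply: eq_bigr => k _.
rewrite !mulr_sumr -!big_split /=; apply: eq_bigr => c _.
ring.
Qed.

Lemma final_ineq (R : realType) (S0 S1 a al be G1 G2 ga gb : R) :
  0 <= S0 -> 0 <= S1 -> 2 * S1 <= be * S0 -> 0 <= a -> a <= al ->
  0 <= G1 -> G1 <= ga -> 0 <= G2 -> G2 <= gb ->
  S0 + 2 * a * S1 + a ^+ 2 * (G1 * G2) <= (1 + al * be) * S0 + al ^+ 2 * ga * gb.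
Proof.
move=> S00 S10 hS a0 aal G10 G1g G20 G2g.
have h1 : 2 * a * S1 <= al * be * S0.
  have h0 : 0 <= be * S0 by apply: le_trans hS; rewrite mulr_ge0.
  have -> : 2 * a * S1 = a * (2 * S1) by ring.
  rewrite -mulrA; apply: le_trans (ler_wpM2l a0 hS) _.
  exact: ler_wpM2r.
have h2 : a ^+ 2 * (G1 * G2) <= al ^+ 2 * (ga * gb).
  apply: ler_pM; rewrite ?exprn_ge0 ?mulr_ge0 //.
    by rewrite lerXn2r ?nnegrE // (le_trans a0).
  exact: ler_pM.
rewrite -mulrA; lra.
Qed.

Lemma nn_E (R : realType) n (i j : 'I_n) : nn (unitv j *m (unitv i)^T : 'M[R]_n).
Proof. by apply: nn_mul => a b; rewrite !mxE; case: (_ && _). Qed.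

Lemma unit1 (R : realType) n (N : 'M[R]_n) :
  spectral_radius N < 1 -> (1%:M - N) \in unitmx.
Proof. by move=> h; have := sr_unit (s := 1) h; rewrite scale1r ler01 lexx; apply. Qed.

Lemma nn_inv1 (R : realType) n (N : 'M[R]_n) :
  nn N -> spectral_radius N < 1 -> nn (invmx (1%:M - N)).
Proof. by move=> h1 h2; have := nn_inv h1 h2; rewrite /Xs scale1r. Qed.

Theorem theorem5p2 (R : realType) (n m : nat) (A : 'M[R]_n) (B : 'M[R]_(n, m))
  (T : nat) (i j : 'I_n) (w : R) :
  spectral_radius (absmx A) < 1 ->
  (0 < T)%N ->
  i != j ->
  spectral_radius (absmx A + `|w| *: (unitv j *m (unitv i)^T)) < 1 ->
  (posdef (gramian T A B) ->
     \tr (invmx (gramian T A B)) >= (n ^ 2)%:R / \tr (Hmx A B)) /\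
  (posdef (gramian T (A + w *: (unitv j *m (unitv i)^T)) B) ->
     \tr (invmx (gramian T (A + w *: (unitv j *m (unitv i)^T)) B)) >=
       (n ^ 2)%:R /
       ((1 + alpha A w * beta A) * \tr (Hmx A B) + alpha A w ^+ 2 * gamma A * gammabar A B)).
Proof.
move=> hsr T0 ij hsr'.
have n0 : (0 < n)%N := leq_ltn_trans (leq0n i) (ltn_ord i).
set N := absmx A.
have nN : nn N by move=> k l; rewrite mxE.
have uN : (1%:M - N) \in unitmx := unit1 hsr.
have nX : nn (Xmx A) := nn_inv1 nN hsr.
have hX1 : (1%:M - N) *m Xmx A = 1%:M by rewrite /Xmx mulmxV.
set V := Xmx A *m absmx B.
have trH : \tr (Hmx A B) = \sum_k \sum_c V k c ^+ 2.
  by rewrite /Hmx -tr_mulT trmx_mul !mulmxA.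
have nB : nn (absmx B) by move=> k l; rewrite mxE.
have nV : nn V := nn_mul nX nB.
have trH0 : 0 <= \tr (Hmx A B).
  by rewrite trH; apply: sumr_ge0 => k _; apply: sumr_ge0 => c _; apply: sqr_ge0.
have n20 : 0 <= (n ^ 2)%:R :> R by [].
split.
- move=> hpd.
  have [hinv trpos] := posdef_tr n0 hpd.
  have hle : \tr (gramian T A B) <= \tr (Hmx A B).
    rewrite trH; apply: (gram_tr_le (N := N)) => //.
      by move=> k l; rewrite mxE.
    exact: X_ge_sum.
  apply: le_trans hinv.
  rewrite ler_wpM2l // lef_pV2 // posrE //; exact: lt_le_trans hle.
- move=> hpd.
  pose E := (unitv j *m (unitv i)^T : 'M[R]_n).
  pose N' := N + `|w| *: E.
  have nE : nn E := nn_E R i j.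
  have nN' : nn N' by move=> k l; rewrite /N' addscale_entry addr_ge0 ?mulr_ge0 ?nN ?nE.
  have hsr2 : spectral_radius N' < 1 by [].
  have uN' := unit1 hsr2.
  set X' := invmx (1%:M - N').
  have nX' : nn X' := nn_inv1 nN' hsr2.
  have hX1' : (1%:M - N') *m X' = 1%:M by rewrite mulmxV.
  have [c0 hSM] := sm (w := w) (i := i) (j := j) uN (erefl (Xmx A)) nX hX1' nX'.
  set c := 1 - `|w| * Xmx A i j.
  set a := `|w| / c.
  have a0 : 0 <= a by rewrite divr_ge0 // ltW.
  have [hinv trpos] := posdef_tr n0 hpd.
  have hle : \tr (gramian T (A + w *: E) B) <=
             \sum_k \sum_c ((X' *m absmx B) k c) ^+ 2.
    apply: (gram_tr_le (N := N')) => //.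
      move=> k l; rewrite /N' !addscale_entry.
      apply: le_trans (ler_normD _ _) _.
      by rewrite normrM (ger0_norm (nE k l)) /N [absmx A k l]mxE.
    exact: X_ge_sum.
  pose x := fun k => Xmx A k j.
  have eXB : forall k c, (X' *m absmx B) k c = V k c + a * x k * V i c.
    move=> k c'; rewrite /V !mxE mulr_sumr -big_split /=; apply: eq_bigr => l _.
    rewrite hSM /x -/c -/a; ring.
  have eS : \sum_k \sum_c ((X' *m absmx B) k c) ^+ 2 =
            \sum_k \sum_c (V k c + a * x k * V i c) ^+ 2.
    by apply: eq_bigr => k _; apply: eq_bigr => c' _; rewrite eXB.
  rewrite eS expand_sq in hle.
  set S0 := \sum_k \sum_c V k c ^+ 2 in hle.
  set S1 := \sum_k \sum_c V k c * x k * V i c in hle.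
  set G1 := \sum_k x k ^+ 2 in hle.
  set G2 := \sum_c V i c ^+ 2 in hle.
  have hS1 : 2 * S1 <= (x i + Num.sqrt G1) * S0.
    exact: (cross_bound i nV (fun k => nX k j)).
  have G1e : Num.sqrt G1 = colnorm (Xmx A *m unitv j).
    rewrite /colnorm /G1; congr Num.sqrt; apply: eq_bigr => k _.
    by rewrite /unitv -colE mxE.
  have hbeta : x i + Num.sqrt G1 <= beta A.
    rewrite /beta le_max; apply/orP; right; apply: lerD.
      have h1 := @le_bigmax0 R _ (fun q => q != i)
                   (fun q => ((unitv i)^T *m Xmx A *m unitv q) 0 0) j.
      rewrite /= unitv_entry eq_sym in h1.
      apply: le_trans (h1 ij) _.
      exact: (@le_bigmax0 R _ xpredT (fun p => \big[Num.max/0]_(q < n | q != p)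
               ((unitv p)^T *m Xmx A *m unitv q) 0 0) i).
    rewrite G1e.
    exact: (@le_bigmax0 R _ xpredT (fun q => colnorm (Xmx A *m unitv q)) j).
  have ha : a <= alpha A w.
    have h1 := @le_bigmax0 R _ (fun q => q != i) (fun q => alpha_pq A w i q) j.
    rewrite /= eq_sym in h1.
    apply: (le_trans (y := alpha_pq A w i j)); first by rewrite /alpha_pq unitv_entry.
    apply: le_trans (h1 ij) _.
    exact: (@le_bigmax0 R _ xpredT (fun p => \big[Num.max/0]_(q < n | q != p)
               alpha_pq A w p q) i).
  have hG1 : G1 <= gamma A.
    apply: le_trans (@le_bigmax0 R _ xpredT (fun k =>
       ((unitv k)^T *m (Xmx A)^T *m Xmx A *m unitv k) 0 0) j isT).
    rewrite -(mulmxA _ (Xmx A)^T) unitv_entry mxE /G1.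
    by apply: ler_sum => k _; rewrite mxE expr2.
  have hG2 : G2 <= gammabar A B.
    apply: le_trans (@le_bigmax0 R _ xpredT (fun k =>
       ((unitv k)^T *m Xmx A *m absmx B *m (absmx B)^T *m (Xmx A)^T *m unitv k) 0 0) i isT).
    have -> : (unitv i)^T *m Xmx A *m absmx B *m (absmx B)^T *m (Xmx A)^T =
              (unitv i)^T *m (V *m V^T) by rewrite /V trmx_mul !mulmxA.
    rewrite unitv_entry mxE /G2.
    by apply: ler_sum => k _; rewrite expr2 [V^T k i]mxE.
  have S00 : 0 <= S0.
    by apply: sumr_ge0 => k _; apply: sumr_ge0 => c' _; apply: sqr_ge0.
  have S10 : 0 <= S1.
    apply: sumr_ge0 => k _; apply: sumr_ge0 => c' _.
    by rewrite !mulr_ge0 // /x.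
  have G10 : 0 <= G1 by apply: sumr_ge0 => k _; apply: sqr_ge0.
  have G20 : 0 <= G2 by apply: sumr_ge0 => k _; apply: sqr_ge0.
  have hS1' : 2 * S1 <= beta A * S0.
    apply: le_trans hS1 _; exact: ler_wpM2r.
  have hD := final_ineq S00 S10 hS1' a0 ha G10 hG1 G20 hG2.
  have e0 : S0 = \tr (Hmx A B) by rewrite trH.
  rewrite e0 in hle hD.
  have hle2 := le_trans hle hD.
  apply: le_trans hinv.
  rewrite ler_wpM2l // lef_pV2 // posrE //; exact: lt_le_trans hle2.
Qed.
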